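(* Let $R$ be a commutative ring and let $U$ be an Abelian monoid object in the category of (cocommutative, counital) coalgebras over $R$, with addition map $\sigma\colon U\otimes_R U\to U$. Suppose that $U$ admits a good filtration $\{F_sU\}$ such that the zero (unit) of the monoid is the good basepoint associated to this filtration and $\sigma(F_sU\otimes F_tU)\subseteq F_{s+t}U$ for all $s,t\ge0$. Then $U$ is an Abelian group object in the category of coalgebras over $R$.
   Context: In the category of coalgebras over $R$, the product of $U$ and $V$ is $U\otimes_RV$ (with the evident coalgebra structure) and the terminal object is $R$. A good filtration of a coalgebra $U$ (counit $\epsilon$, coproduct $\psi$) is a sequence of submodules $F_sU$, $s\ge0$, such that: (a) $\epsilon\colon F_0U\to R$ is an isomorphism; (b) for $s>0$, $F_sU/F_{s-1}U$ is a finitely generated free $R$-module; (c) $\bigcup_sF_sU=U$; (d) $\psi(F_sU)\subseteq\sum_{s=t+u}F_tU\otimes F_uU$. The associated good basepoint is the coalgebra map $\eta\colon R\xrightarrow{\epsilon^{-1}}F_0U\hookrightarrow U$. *)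

(* Defs.v *)
From HB Require Import structures.
From mathcomp Require Import all_boot all_order all_algebra.
From mathcomp Require Import boolp generic_quotient.
Set Implicit Arguments. Unset Strict Implicit. Unset Printing Implicit Defensive.
Import GRing.Theory.
Local Open Scope ring_scope.
Local Open Scope quotient_scope.

(* Tensor product U (x)_R V of two R-modules over a commutative ring R. *)
(* Elements are formal sums  sum c_i (u_i, v_i)  modulo the relation   *)
(* identifying two formal sums when every R-bilinear map (into any     *)
(* R-module) takes the same value on them; this is the usual kernel of *)
(* the presentation of the tensor product.                             *)

Definition islinear (R : pzRingType) (U W : lmodType R) (f : U -> W) :=
  forall (a : R) (x y : U), f (a *: x + y) = a *: f x + f y.

Section Tensor.
Variables (R : comPzRingType) (U V : lmodType R).

Definition bilin (W : lmodType R) (f : U -> V -> W) :=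
  (forall v, islinear (fun u => f u v)) /\ (forall u, islinear (f u)).

Definition fsum := seq (R * U * V).

Definition tev (W : lmodType R) (f : U -> V -> W) (s : fsum) : W :=
  \sum_(x <- s) x.1.1 *: f x.1.2 x.2.

Definition tensor_eqP (s t : fsum) : Prop :=
  forall (W : lmodType R) (f : U -> V -> W), bilin f -> tev f s = tev f t.

Definition tensor_eq (s t : fsum) : bool := `[< tensor_eqP s t >].

Lemma tensor_eq_refl : reflexive tensor_eq.
Proof. by move=> s; apply/asboolP. Qed.
Lemma tensor_eq_sym : symmetric tensor_eq.
Proof.
move=> s t; apply/asboolP/asboolP => H W f bf; by rewrite H.
Qed.
Lemma tensor_eq_trans : transitive tensor_eq.
Proof.
move=> t s u /asboolP H1 /asboolP H2; apply/asboolP => W f bf.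
by rewrite H1 // H2.
Qed.

Canonical tensor_equiv := EquivRel tensor_eq tensor_eq_refl tensor_eq_sym tensor_eq_trans.

Definition tensor := {eq_quot tensor_eq}%qT.
HB.instance Definition _ := EqQuotient.on tensor.
HB.instance Definition _ := Choice.on tensor.

Local Notation pi := (\pi_tensor).

Lemma tensor_piE (s t : fsum) : pi s = pi t <-> tensor_eqP s t.
Proof.
split; first by move/eqP; rewrite eqmodE => /asboolP.
by move=> H; apply/eqP; rewrite eqmodE; apply/asboolP.
Qed.

Lemma tev_cat (W : lmodType R) (f : U -> V -> W) s t : tev f (s ++ t) = tev f s + tev f t.
Proof. by rewrite /tev big_cat. Qed.

Definition fscale (a : R) (s : fsum) : fsum := [seq (a * x.1.1, x.1.2, x.2) | x <- s].

Lemma tev_scale (W : lmodType R) (f : U -> V -> W) a s : tev f (fscale a s) = a *: tev f s.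
Proof.
rewrite /tev big_map scaler_sumr; apply: eq_bigr => x _; by rewrite scalerA.
Qed.

Lemma tev_repr (W : lmodType R) (f : U -> V -> W) s : bilin f -> tev f (repr (pi s)) = tev f s.
Proof.
move=> bf; have: pi (repr (pi s)) = pi s by rewrite reprK.
by move/tensor_piE => /(_ W f bf).
Qed.

Definition tzero : tensor := pi [::].
Definition tadd (x y : tensor) : tensor := pi (repr x ++ repr y).
Definition tscale (a : R) (x : tensor) : tensor := pi (fscale a (repr x)).
Definition topp (x : tensor) : tensor := tscale (-1) x.

Lemma tev_nil (W : lmodType R) (f : U -> V -> W) : tev f [::] = 0.
Proof. by rewrite /tev big_nil. Qed.

Ltac tens := apply/tensor_piE => W f bf;
  do 3 (rewrite ?(tev_cat, tev_scale, tev_nil) ?tev_repr //).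

Lemma taddA : associative tadd.
Proof.
elim/quotW=> x; elim/quotW=> y; elim/quotW=> z; rewrite /tadd; tens.
by rewrite addrA.
Qed.
Lemma taddC : commutative tadd.
Proof. elim/quotW=> x; elim/quotW=> y; rewrite /tadd; tens. by rewrite addrC. Qed.
Lemma tadd0 : left_id tzero tadd.
Proof.
elim/quotW=> x; rewrite /tadd /tzero -[RHS]reprK; tens.
by rewrite add0r.
Qed.
Lemma taddN : left_inverse tzero topp tadd.
Proof.
elim/quotW=> x; rewrite /tadd /topp /tscale /tzero; tens.
by rewrite scaleN1r addNr.
Qed.

HB.instance Definition _ := GRing.isZmodule.Build tensor taddA taddC tadd0 taddN.

Lemma tscaleA a b (x : tensor) : tscale a (tscale b x) = tscale (a * b) x.
Proof.
elim/quotW: x => x; rewrite /tscale; tens.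
by rewrite scalerA.
Qed.
Lemma tscale1 : left_id 1 tscale.
Proof.
elim/quotW=> x; rewrite /tscale -[RHS]reprK; tens.
by rewrite scale1r.
Qed.
Lemma tscaleDr : right_distributive tscale +%R.
Proof.
move=> a; elim/quotW=> x; elim/quotW=> y.
rewrite /GRing.add /= /tadd /tscale; tens.
by rewrite scalerDr.
Qed.
Lemma tscaleDl (x : tensor) : {morph tscale^~ x : a b / a + b}.
Proof.
elim/quotW: x => x a b.
rewrite /GRing.add /= /tadd /tscale; tens.
exact: scalerDl.
Qed.

HB.instance Definition _ :=
  GRing.Zmodule_isLmodule.Build R tensor tscaleA tscale1 tscaleDr tscaleDl.

Definition tmul (u : U) (v : V) : tensor := pi [:: (1, u, v)].

Definition tlift (W : lmodType R) (f : U -> V -> W) (t : tensor) : W :=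
  tev f (repr t).

End Tensor.

Notation "u (x) v" := (tmul u v) (at level 40, left associativity).

Definition tmap (R : comPzRingType) (U V U' V' : lmodType R)
  (f : U -> U') (g : V -> V') : tensor U V -> tensor U' V' :=
  tlift (fun a b => f a (x) g b).

Section Coalgebra.
Variable R : comPzRingType.

Definition is_coalgebra (U : lmodType R) (psi : U -> tensor U U) (eps : U -> R^o) :=
  [/\ islinear psi /\ islinear eps,
      (forall u, tlift (fun a b => eps a *: b) (psi u) = u),
      (forall u, tlift (fun a b => eps b *: a) (psi u) = u),
      (forall u, tlift (fun a b => b (x) a) (psi u) = psi u) &
      (* coassociativity: (1 (x) psi) psi = assoc o (psi (x) 1) psi *)
      (forall u, tlift (fun a b => a (x) psi b) (psi u) =
                 tlift (fun x c => tlift (fun a b => a (x) (b (x) c)) (psi x)) (psi u))].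

Definition is_coalg_map (U V : lmodType R)
  (psiU : U -> tensor U U) (epsU : U -> R^o)
  (psiV : V -> tensor V V) (epsV : V -> R^o) (f : U -> V) :=
  [/\ islinear f, (forall u, psiV (f u) = tmap f f (psiU u)) &
      (forall u, epsV (f u) = epsU u)].

(* the coalgebra structure on U (x) U (the product in the category) *)
Definition tensor_coprod (U : lmodType R) (psi : U -> tensor U U) :
  tensor U U -> tensor (tensor U U) (tensor U U) :=
  tlift (fun a b => tlift (fun a1 a2 => tlift (fun b1 b2 =>
     (a1 (x) b1) (x) (a2 (x) b2)) (psi b)) (psi a)).

Definition tensor_counit (U : lmodType R) (eps : U -> R^o) : tensor U U -> R^o :=
  tlift (fun a b => (eps a * eps b : R^o)).

(* the coalgebra structure on R (the terminal object) *)
Definition unit_coprod (r : R) : tensor R^o R^o := r *: ((1 : R^o) (x) (1 : R^o)).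
Definition unit_counit (r : R^o) : R^o := r.

Definition is_submodule (U : lmodType R) (S : U -> Prop) :=
  S 0 /\ forall (a : R) x y, S x -> S y -> S (a *: x + y).

Definition tspan (U : lmodType R) (P : U -> U -> Prop) (z : tensor U U) :=
  exists l : seq (R * U * U),
    (forall p, p \in l -> P p.1.2 p.2) /\ z = \sum_(p <- l) p.1.1 *: (p.1.2 (x) p.2).

Definition good_filtration (U : lmodType R) (psi : U -> tensor U U) (eps : U -> R^o)
  (F : nat -> U -> Prop) :=
  [/\ (forall s, is_submodule (F s)) /\ (forall s x, F s x -> F s.+1 x),
      (forall r : R, exists! x, F 0 x /\ eps x = r),
      (* (b) F_s U / F_{s-1} U is a finitely generated free R-module *)
      (forall s, (0 < s)%N -> exists n (e : 'I_n -> U),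
          [/\ forall i, F s (e i),
              forall x, F s x -> exists c : 'I_n -> R, F s.-1 (x - \sum_i c i *: e i) &
              forall c : 'I_n -> R, F s.-1 (\sum_i c i *: e i) -> forall i, c i = 0]),
      (forall x, exists s, F s x) &
      (forall s x, F s x ->
         tspan (fun a b => exists t u, [/\ (t + u)%N = s, F t a & F u b]) (psi x))].

End Coalgebra.

(* Main.v *)
Require Import Defs.
From mathcomp Require Import all_boot all_order all_algebra.
From mathcomp Require Import boolp generic_quotient zify.
Import GRing.Theory.
Local Open Scope ring_scope.

Module Aux.
Set Implicit Arguments. Unset Strict Implicit. Unset Printing Implicit Defensive.

Section TB.
Local Open Scope quotient_scope.
Variables (R : comPzRingType) (U V : lmodType R).
Local Notation pi := (\pi_(tensor U V)).

Lemma lin0 (W W' : lmodType R) (g : W -> W') : islinear g -> g 0 = 0.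
Proof.
move=> lg; have H := lg 1 0 0; rewrite !scale1r addr0 in H.
by apply: (addrI (g 0)); rewrite addr0 -H.
Qed.

Lemma linZ (W W' : lmodType R) (g : W -> W') : islinear g -> forall a x, g (a *: x) = a *: g x.
Proof. by move=> lg a x; have := lg a x 0; rewrite addr0 lin0 // addr0. Qed.

Lemma linD (W W' : lmodType R) (g : W -> W') : islinear g -> forall x y, g (x + y) = g x + g y.
Proof. by move=> lg x y; have := lg 1 x y; rewrite !scale1r. Qed.

Lemma linN (W W' : lmodType R) (g : W -> W') : islinear g -> forall x, g (- x) = - g x.
Proof. by move=> lg x; rewrite -scaleN1r linZ // scaleN1r. Qed.

Lemma linB (W W' : lmodType R) (g : W -> W') : islinear g -> forall x y, g (x - y) = g x - g y.
Proof. by move=> lg x y; rewrite linD // linN. Qed.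

Lemma lin_sum (W W' : lmodType R) (g : W -> W') I (r : seq I) (P : pred I) (F : I -> W) :
  islinear g -> g (\sum_(i <- r | P i) F i) = \sum_(i <- r | P i) g (F i).
Proof.
move=> lg; elim: r => [|i r IH]; first by rewrite !big_nil lin0.
by rewrite !big_cons; case: (P i); rewrite ?linD ?IH.
Qed.

Lemma tev_eq (W : lmodType R) (f : U -> V -> W) s t :
  bilin f -> pi s = pi t -> tev f s = tev f t.
Proof. by move=> bf /tensor_piE; apply. Qed.

Lemma tlift_pi (W : lmodType R) (f : U -> V -> W) s : bilin f -> tlift f (pi s) = tev f s.
Proof. by move=> bf; rewrite /tlift tev_repr. Qed.

Lemma tlift_lin (W : lmodType R) (f : U -> V -> W) : bilin f -> islinear (tlift f).
Proof.
move=> bf a x y.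
rewrite /tlift {1}/GRing.add /= /tadd /GRing.scale /= /tscale.
rewrite tev_repr // tev_cat tev_repr // tev_scale //.
Qed.

Lemma tlift_tmul (W : lmodType R) (f : U -> V -> W) u v : bilin f -> tlift f (u (x) v) = f u v.
Proof. by move=> bf; rewrite /tmul tlift_pi // /tev big_seq1 /= scale1r. Qed.

Lemma tlift_push (W W' : lmodType R) (f : U -> V -> W) (g : W -> W') t :
  islinear g -> g (tlift f t) = tlift (fun a b => g (f a b)) t.
Proof.
move=> lg; rewrite /tlift /tev lin_sum //; apply: eq_bigr => x _; by rewrite linZ.
Qed.

Lemma tlift_ext (W : lmodType R) (f g : U -> V -> W) t :
  (forall a b, f a b = g a b) -> tlift f t = tlift g t.
Proof. by move=> H; have -> : f = g by apply: funext => a; apply: funext => b. Qed.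

Lemma tlift_linf (W : lmodType R) (c : R) (f g : U -> V -> W) t :
  tlift (fun a b => c *: f a b + g a b) t = c *: tlift f t + tlift g t.
Proof.
rewrite /tlift /tev scaler_sumr -big_split; apply: eq_bigr => x _.
by rewrite scalerDr !scalerA mulrC.
Qed.

Lemma tlift_scalef (W : lmodType R) (c : R) (f : U -> V -> W) t :
  tlift (fun a b => c *: f a b) t = c *: tlift f t.
Proof. by rewrite /tlift /tev scaler_sumr; apply: eq_bigr => x _; rewrite !scalerA mulrC. Qed.

Lemma tlift0f (W : lmodType R) t : tlift (fun (a : U) (b : V) => (0 : W)) t = 0.
Proof. by rewrite /tlift /tev big1 // => x _; rewrite scaler0. Qed.

Lemma tlift_sumf (W : lmodType R) I (r : seq I) (F : I -> U -> V -> W) t :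
  tlift (fun a b => \sum_(i <- r) F i a b) t = \sum_(i <- r) tlift (F i) t.
Proof.
elim: r => [|i r IH].
  rewrite big_nil; transitivity (tlift (fun _ _ => (0:W)) t); last exact: tlift0f.
  by apply: tlift_ext => a b; rewrite big_nil.
rewrite big_cons -IH -[tlift (F i) t]scale1r -tlift_linf.
by apply: tlift_ext => a b; rewrite big_cons scale1r.
Qed.

Lemma tmul_bilin : bilin (@tmul R U V).
Proof.
split=> [v|u] a x y; rewrite /GRing.add /= /tadd /GRing.scale /= /tscale /tmul;
apply/tensor_piE => W f bf; rewrite tev_cat !tev_repr // tev_scale tev_repr //;
rewrite /tev !big_seq1 /= !scale1r; case: bf => [b1 b2]; [exact: b1 | exact: b2].
Qed.

Lemma tmul0l (v : V) : (0 : U) (x) v = 0.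
Proof. by case: tmul_bilin => H _; apply: (lin0 (H v)). Qed.
Lemma tmul0r (u : U) : u (x) (0 : V) = 0.
Proof. by case: tmul_bilin => _ H; apply: (lin0 (H u)). Qed.

Lemma pi_sum s : pi s = \sum_(x <- s) x.1.1 *: (x.1.2 (x) x.2).
Proof.
elim: s => [|x s IH]; first by rewrite big_nil.
rewrite big_cons -IH /GRing.add /= /tadd /GRing.scale /= /tscale /tmul.
apply/tensor_piE => W f bf; rewrite tev_cat !tev_repr // tev_scale tev_repr //.
by rewrite /tev big_cons big_seq1 /= scale1r.
Qed.

Lemma tlift_tmulK t : tlift (@tmul R U V) t = t.
Proof.
elim/quotW: t => s; rewrite tlift_pi ?pi_sum //; exact: tmul_bilin.
Qed.

Lemma tensor_ext (W : lmodType R) (g h : tensor U V -> W) :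
  islinear g -> islinear h -> (forall u v, g (u (x) v) = h (u (x) v)) -> forall t, g t = h t.
Proof.
move=> lg lh H t; rewrite -(tlift_tmulK t) !tlift_push //; exact: tlift_ext.
Qed.

End TB.


Section Lin.
Variable R : comPzRingType.
Implicit Types (U V W X Y : lmodType R).

Lemma lin_id U : islinear (fun x : U => x).
Proof. by []. Qed.

Lemma lin_comp U V W (g : V -> W) (G : U -> V) :
  islinear g -> islinear G -> islinear (fun p => g (G p)).
Proof. by move=> lg lG a x y; rewrite lG lg. Qed.

Lemma lin_LP U V W X (h : X -> U -> V -> W) t :
  (forall x y, islinear (fun p => h p x y)) -> islinear (fun p => tlift (h p) t).
Proof.
move=> H a x y; rewrite -tlift_linf; apply: tlift_ext => u v; exact: H.
Qed.

Lemma lin_tmull U V X (v : V) (G : X -> U) (Hl : islinear G) : islinear (fun p => G p (x) v).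
Proof. by move=> a x y; rewrite Hl; case: (tmul_bilin U V) => H _; rewrite H. Qed.

Lemma lin_tmulr U V (u : U) : islinear (@tmul R U V u).
Proof. by case: (tmul_bilin U V) => _ H; apply: H. Qed.

Lemma lin_scalel U X (v : U) (G : X -> R^o) : islinear G -> islinear (fun p => G p *: v).
Proof. by move=> lG a x y; rewrite lG scalerDl scalerA. Qed.

Lemma lin_scaler U (c : R) : islinear (fun p : U => c *: p).
Proof. by move=> a x y; rewrite scalerDr !scalerA mulrC. Qed.

Lemma ilin_mulr X (c : R) (G : X -> R^o) : islinear G -> islinear (fun p => (G p * c : R^o)).
Proof. by move=> lG a x y; rewrite lG /GRing.scale /= mulrDl mulrA. Qed.

Lemma ilin_mull X (c : R) (G : X -> R^o) : islinear G -> islinear (fun p => (c * G p : R^o)).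
Proof. by move=> lG a x y; rewrite lG /GRing.scale /= mulrDr !mulrA [c * a]mulrC. Qed.

Lemma lin_add U V (G1 G2 : U -> V) : islinear G1 -> islinear G2 -> islinear (fun p => G1 p + G2 p).
Proof.
move=> l1 l2 a x y; rewrite l1 l2 scalerDr; rewrite -!addrA; congr (_ + _).
by rewrite addrCA.
Qed.

Lemma lin_opp U V (G1 : U -> V) : islinear G1 -> islinear (fun p => - G1 p).
Proof. by move=> l1 a x y; rewrite l1 opprD scalerN. Qed.

Lemma lin_zero U V : islinear (fun _ : U => (0 : V)).
Proof. by move=> a x y; rewrite scaler0 addr0. Qed.

Lemma bilinL U V W (f : U -> V -> W) : bilin f -> forall v, islinear (fun u => f u v).
Proof. by case. Qed.
Lemma bilinR U V W (f : U -> V -> W) : bilin f -> forall u, islinear (f u).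
Proof. by case. Qed.

End Lin.


Ltac lin := repeat match goal with |- forall _, _ => intro end; cbv beta;
  match goal with
  | |- bilin _ => first [solve [eauto] | split; intros; lin]
  | |- islinear (fun p => tlift _ _) =>
      first [ apply: lin_LP; intros; lin
            | apply: lin_comp; [apply: tlift_lin; lin | lin] ]
  | |- islinear (tlift _) => apply: tlift_lin; lin
  | |- islinear (fun p => p) => exact: lin_id
  | |- islinear (fun p => (@?G p) (x) ?v) => apply: lin_tmull; lin
  | |- islinear (fun p => ?u (x) (@?G p)) => apply: (lin_comp (g := tmul u)); [exact: lin_tmulr | lin]
  | |- islinear (@tmul _ _ _ _) => exact: lin_tmulr
  | |- islinear (fun p => (@?G p) + (@?H p)) => apply: lin_add; lin
  | |- islinear (fun p => - (@?G p)) => apply: lin_opp; lin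
  | |- islinear (fun p => (@?G p) - (@?H p)) => apply: lin_add; [lin | apply: lin_opp; lin]
  | |- islinear (fun p => ?c *: (@?G p)) => apply: (lin_comp (g := fun q => c *: q)); [exact: lin_scaler | lin]
  | |- islinear (fun p => (@?G p) *: ?v) => apply: lin_scalel; lin
  | |- islinear (fun p => (@?G p) * ?c) => apply: ilin_mulr; lin
  | |- islinear (fun p => ?c * (@?G p)) => apply: ilin_mull; lin
  | |- islinear (fun _ => 0) => exact: lin_zero
  | |- _ => first [ solve [eauto] | solve [apply: bilinR; eauto] | solve [apply: bilinL; eauto]
                  | apply: lin_comp; [lin | lin] ]
  end.


Section Main.
Variables (R : comPzRingType) (U : lmodType R)
  (psi : U -> tensor U U) (eps : U -> R^o)
  (sigma : tensor U U -> U) (eta : R^o -> U) (F : nat -> U -> Prop).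
Hypothesis Hco : is_coalgebra psi eps.
Hypothesis Hsig : is_coalg_map (tensor_coprod psi) (tensor_counit eps) psi eps sigma.
Hypothesis Heta : @is_coalg_map R R^o U (@unit_coprod R) (@unit_counit R) psi eps eta.
Hypothesis Hassoc : forall a b c, sigma (sigma (a (x) b) (x) c) = sigma (a (x) sigma (b (x) c)).
Hypothesis Hcomm : forall a b, sigma (a (x) b) = sigma (b (x) a).
Hypothesis Hunit : forall a, sigma (eta 1 (x) a) = a.
Hypothesis Hgood : good_filtration psi eps F.
Hypothesis Hbase : forall r : R, F 0%N (eta r) /\ eps (eta r) = r.

Lemma lpsi : islinear psi. Proof. by case: Hco => -[]. Qed.
Lemma leps : islinear eps. Proof. by case: Hco => -[]. Qed.
Lemma lsig : islinear sigma. Proof. by case: Hsig. Qed.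
Lemma leta : islinear eta. Proof. by case: Heta. Qed.
Hint Resolve lpsi leps lsig leta : core.

Lemma counitL (W : lmodType R) (g : U -> W) u : islinear g ->
  tlift (fun a b => eps a *: g b) (psi u) = g u.
Proof.
move=> lg; case: Hco => _ H _ _ _; rewrite -{2}(H u) tlift_push //.
by apply: tlift_ext => a b; rewrite linZ.
Qed.

Lemma counitR (W : lmodType R) (g : U -> W) u : islinear g ->
  tlift (fun a b => eps b *: g a) (psi u) = g u.
Proof.
move=> lg; case: Hco => _ _ H _ _; rewrite -{2}(H u) tlift_push //.
by apply: tlift_ext => a b; rewrite linZ.
Qed.

Lemma cocomm (W : lmodType R) (f : U -> U -> W) u : bilin f ->
  tlift f (psi u) = tlift (fun a b => f b a) (psi u).
Proof.
move=> bf; case: Hco => _ _ _ H _; rewrite -{1}H tlift_push; last by apply: tlift_lin.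
by apply: tlift_ext => a b; rewrite tlift_tmul.
Qed.

Lemma coassoc (W : lmodType R) (h : U -> U -> U -> W) u :
  (forall a, bilin (h a)) -> (forall b c, islinear (fun a => h a b c)) ->
  tlift (fun a b => tlift (h a) (psi b)) (psi u) =
  tlift (fun x c => tlift (fun a b => h a b c) (psi x)) (psi u).
Proof.
move=> h1 h2; case: Hco => _ _ _ _ H.
pose M := tlift (fun (a : U) (t : tensor U U) => tlift (h a) t).
have bM : bilin (fun (a : U) (t : tensor U U) => tlift (h a) t).
  lin.
have lM : islinear M by apply: tlift_lin.
have := congr1 M (H u); rewrite /M !tlift_push //.
rewrite (tlift_ext (g := fun a b => tlift (h a) (psi b))); last first.
  by move=> a b; rewrite tlift_tmul.
move=> ->; apply: tlift_ext => x c; rewrite tlift_push //.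
apply: tlift_ext => a b; rewrite !tlift_tmul //; lin.
Qed.


Definition e (u : U) : U := eta (eps u).
Definition conv (f g : U -> U) (u : U) : U := sigma (tlift (fun a b => f a (x) g b) (psi u)).
Definition J (u : U) : U := u - e u.
Fixpoint Jp (k : nat) : U -> U := if k is k'.+1 then conv J (Jp k') else e.

Lemma le : islinear e. Proof. rewrite /e; lin. Qed.
Lemma lconv f g : islinear f -> islinear g -> islinear (conv f g).
Proof. move=> lf lg; rewrite /conv; lin. Qed.
Lemma lJ : islinear J.
Proof. rewrite /J /e; lin. Qed.
Lemma lJp k : islinear (Jp k).
Proof. elim: k => [|k IH] /=; [exact: le | apply: lconv => //; exact: lJ]. Qed.
Hint Resolve le lJ lJp : core.

Lemma Fsub s : is_submodule (F s). Proof. by case: Hgood => -[H _] *; apply: H. Qed.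
Lemma FS s x : F s x -> F s.+1 x. Proof. by case: Hgood => -[_ H] *; apply: H. Qed.
Lemma Fmono s t x : (s <= t)%N -> F s x -> F t x.
Proof.
move=> st Fx; rewrite -(subnKC st); elim: (t - s)%N => [|n IH].
  by rewrite addn0.
by rewrite addnS; apply: FS.
Qed.
Lemma Fex x : exists s, F s x. Proof. by case: Hgood. Qed.
Lemma F0e x : F 0 x -> x = e x.
Proof.
case: Hgood => _ H _ _ _ Fx; have [y [_ Hy]] := H (eps x).
have h1 := Hy x (conj Fx erefl); have h2 := Hy (e x) (Hbase (eps x)).
by rewrite -h2 h1.
Qed.
Lemma J0 x : F 0 x -> J x = 0.
Proof. by move=> /F0e Hx; rewrite /J -Hx subrr. Qed.

Lemma FL (W : lmodType R) (f : U -> U -> W) s u : bilin f -> F s u ->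
  (forall t w a b, (t + w)%N = s -> F t a -> F w b -> f a b = 0) ->
  tlift f (psi u) = 0.
Proof.
move=> bf Fu H; case: Hgood => _ _ _ _ /(_ s u Fu) [l [Hl ->]].
rewrite lin_sum; last exact: tlift_lin.
rewrite big1_seq // => p /Hl [t [w [tw Fa Fb]]].
by rewrite linZ ?tlift_tmul ?(H t w) ?scaler0 //; exact: tlift_lin.
Qed.

Lemma nilp n u : F n u -> Jp n.+1 u = 0.
Proof.
elim: n u => [|n IH] u Fu /=.
  rewrite /conv (FL (s := 0)) ?lin0 //; first by lin.
  move=> t w a b; case: t => // _ /J0 -> _.
  by rewrite tmul0l.
rewrite /conv (FL (s := n.+1)) ?lin0 //; first by lin.
move=> t w a b; case: t => [|t] tw.
  by move=> /J0 -> _; rewrite tmul0l.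
move=> _ Fb; have Fb' : F n b by apply: (Fmono _ Fb); rewrite -ltnS -tw addSn ltnS leq_addl.
have /= H0 := IH b Fb'. transitivity (J a (x) conv J (Jp n) b); first by []. by rewrite H0 tmul0r.
Qed.

Lemma nilp' n k u : F n u -> (n < k)%N -> Jp k u = 0.
Proof.
move=> Fu nk; case: k nk => // k nk; apply: nilp; rewrite ltnS in nk; exact: (Fmono nk Fu).
Qed.


Lemma FLeq (W : lmodType R) (f f' : U -> U -> W) s u : bilin f -> bilin f' -> F s u ->
  (forall t w a b, (t + w)%N = s -> F t a -> F w b -> f a b = f' a b) ->
  tlift f (psi u) = tlift f' (psi u).
Proof.
move=> bf bf' Fu H; case: Hgood => _ _ _ _ /(_ s u Fu) [l [Hl ->]].
rewrite !lin_sum; try exact: tlift_lin.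
apply: eq_big_seq => p /Hl [t [w [tw Fa Fb]]].
by rewrite !linZ ?tlift_tmul ?(H t w) //; exact: tlift_lin.
Qed.

Definition sN (u : U) : nat := proj1_sig (cid (Fex u)).
Lemma sNP u : F (sN u) u. Proof. exact: (proj2_sig (cid (Fex u))). Qed.

Definition Sm (m : nat) (u : U) : U := \sum_(0 <= k < m) (-1) ^+ k *: Jp k u.
Definition S (u : U) : U := Sm (sN u).+1 u.

Lemma Sm_stable n m u : (forall k, (n <= k)%N -> Jp k u = 0) -> (n <= m)%N -> Sm m u = Sm n u.
Proof.
move=> Hz nm; rewrite /Sm (big_cat_nat (leq0n n) nm) /=.
rewrite [X in _ + X]big1_seq ?addr0 // => k /andP[_]; rewrite mem_index_iota => /andP[nk _].
by rewrite Hz ?scaler0.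
Qed.

Lemma SE s m u : F s u -> (s < m)%N -> S u = Sm m u.
Proof.
move=> Fu sm; rewrite /S.
have H1 : forall k, (s.+1 <= k)%N -> Jp k u = 0 by move=> k; apply: nilp'.
have H2 : forall k, ((sN u).+1 <= k)%N -> Jp k u = 0 by move=> k; apply: nilp'; exact: sNP.
rewrite -(@Sm_stable _ (maxn (sN u).+1 s.+1)) ?leq_maxl //.
  by rewrite (@Sm_stable s.+1) ?leq_maxr // (@Sm_stable s.+1 m).
Qed.

Lemma lSm m : islinear (Sm m).
Proof.
move=> c x y; rewrite /Sm scaler_sumr -big_split; apply: eq_bigr => k _.
by rewrite lJp scalerDr !scalerA mulrC.
Qed.

Lemma FD s t c x y : F s x -> F t y -> F (maxn s t) (c *: x + y).
Proof.
move=> Fx Fy; case: (Fsub (maxn s t)) => _ H; apply: H.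
  by apply: (Fmono _ Fx); rewrite leq_maxl.
by apply: (Fmono _ Fy); rewrite leq_maxr.
Qed.

Lemma lS : islinear S.
Proof.
move=> c x y; set z := c *: x + y.
pose m := (sN x + sN y + sN z).+1.
rewrite (SE (m := m) (sNP z)) ?(SE (m := m) (sNP x)) ?(SE (m := m) (sNP y)) ?lSm //;
  rewrite /m ltnS; lia.
Qed.
Hint Resolve lS : core.


Lemma sigeps t : eps (sigma t) = tlift (fun a b => (eps a * eps b : R^o)) t.
Proof. by case: Hsig => _ _ ->. Qed.
Lemma sigpsi t : psi (sigma t) = tmap sigma sigma (tensor_coprod psi t).
Proof. by case: Hsig => _ ->. Qed.
Lemma etaeps r : eps (eta r) = r.
Proof. by case: Heta => _ _ ->. Qed.
Lemma eta1 r : eta r = r *: eta 1.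
Proof. by rewrite -linZ // /GRing.scale /= mulr1. Qed.

Lemma eps_convJ g u : islinear g -> eps (conv J g u) = 0.
Proof.
move=> lg; rewrite /conv sigeps tlift_push; last by lin.
rewrite -(tlift0f _ (psi u)); apply: tlift_ext => a b.
rewrite tlift_tmul; last by lin.
by rewrite /J linB // etaeps subrr mul0r.
Qed.

Lemma eps_S u : eps (S u) = eps u.
Proof.
rewrite /S /Sm lin_sum // big_ltn // expr0 scale1r /= /e etaeps.
rewrite big1_seq ?addr0 // => k /andP[_]; rewrite mem_index_iota => /andP[k0 _].
case: k k0 => // k _; rewrite linZ //= eps_convJ //.
by rewrite /GRing.scale /= mulr0.
Qed.

Lemma conv_e g u : islinear g -> conv e g u = g u.
Proof.
move=> lg; rewrite /conv tlift_push //; rewrite -(counitL u lg).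
apply: tlift_ext => a b; rewrite /e eta1.
case: (tmul_bilin U U) => H _.
by rewrite (linZ (H (g b))) (linZ lsig) Hunit.
Qed.

Lemma conv_id_split g u : islinear g -> conv (fun x => x) g u = g u + conv J g u.
Proof.
move=> lg; rewrite -{1}(conv_e u lg) /conv -linD //; congr sigma.
rewrite -[tlift (fun a b => e a (x) g b) (psi u)]scale1r -tlift_linf.
apply: tlift_ext => a b; rewrite scale1r.
case: (tmul_bilin U U) => H _; rewrite -(linD (H (g b))).
by rewrite /J addrC subrK.
Qed.

Lemma conv_comm f g u : islinear f -> islinear g -> conv f g u = conv g f u.
Proof.
move=> lf lg; rewrite /conv cocomm; last by lin.
by rewrite !tlift_push //; apply: tlift_ext => a b; rewrite Hcomm.
Qed.

Lemma telesc (x : nat -> U) m :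
  \sum_(0 <= k < m) (-1) ^+ k *: (x k + x k.+1) = x 0%N + (-1) ^+ m.+1 *: x m.
Proof.
elim: m => [|m IH]; first by rewrite big_nil expr1 scaleN1r subrr.
rewrite big_nat_recr //= IH -addrA; congr (_ + _).
by rewrite !exprS !mulN1r !scaleNr opprK scalerDr addrA addNr add0r.

Qed.

Lemma Smain u : conv (fun x => x) S u = e u.
Proof.
pose s := sN u; have Fu : F s u := sNP u; pose m := s.+2.
rewrite /conv (FLeq (f' := fun a b => a (x) Sm m b) _ _ Fu); first last.
- move=> t w a b tw _ Fb; rewrite (SE (m := m) Fb) // /m; lia.
- have lsm := lSm m; lin.
- lin.
rewrite (tlift_ext (g := fun a b => \sum_(0 <= k < m) ((-1) ^+ k *: (a (x) Jp k b)))); last first.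
  move=> a b; rewrite /Sm lin_sum; last exact: lin_tmulr.
  by apply: eq_bigr => k _; rewrite linZ //; exact: lin_tmulr.
rewrite tlift_sumf lin_sum //.
rewrite (eq_bigr (fun k => (-1) ^+ k *: (Jp k u + Jp k.+1 u))); last first.
  move=> k _; rewrite tlift_scalef linZ //.
  by have := conv_id_split u (lJp k); rewrite /conv => ->.
rewrite telesc (nilp' (n := s) (k := m)) ?scaler0 ?addr0 //.
Qed.


Definition mul2 (t t' : tensor U U) : tensor U U :=
  tlift (fun a b => tlift (fun c d => sigma (a (x) c) (x) sigma (b (x) d)) t') t.
Definition conv2 (G H : U -> tensor U U) (u : U) : tensor U U :=
  tlift (fun a b => mul2 (G a) (H b)) (psi u).
Definition E2 := eta 1 (x) eta 1.
Definition e2 (u : U) : tensor U U := (eps u : R) *: E2.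

Lemma bmul2in : forall t', bilin (fun a b => tlift (fun c d => sigma (a (x) c) (x) sigma (b (x) d)) t').
Proof. move=> t'; lin. Qed.
Lemma lmul2l t' : islinear (fun t => mul2 t t').
Proof. rewrite /mul2; apply: tlift_lin; exact: bmul2in. Qed.
Lemma lmul2r t : islinear (fun t' => mul2 t t').
Proof. rewrite /mul2; lin. Qed.
Lemma mul2_tmul a b c d : mul2 (a (x) b) (c (x) d) = sigma (a (x) c) (x) sigma (b (x) d).
Proof. by rewrite /mul2 tlift_tmul ?tlift_tmul //; [lin | exact: bmul2in]. Qed.
Hint Resolve lmul2l lmul2r : core.

Lemma mul2A t1 t2 t3 : mul2 (mul2 t1 t2) t3 = mul2 t1 (mul2 t2 t3).
Proof.
move: t1; apply: tensor_ext; [lin | lin | move=> a b].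
move: t2; apply: tensor_ext; [lin | lin | move=> c d].
move: t3; apply: tensor_ext; [lin | lin | move=> p q].
by rewrite !mul2_tmul !Hassoc.
Qed.

Lemma mul2E2r t : mul2 t E2 = t.
Proof.
move: t; apply: tensor_ext; [lin | lin | move=> a b].
by rewrite /E2 mul2_tmul !(Hcomm _ (eta 1)) !Hunit.
Qed.
Lemma mul2E2l t : mul2 E2 t = t.
Proof.
move: t; apply: tensor_ext; [lin | lin | move=> a b].
by rewrite /E2 mul2_tmul !Hunit.
Qed.

Lemma lconv2 G H : islinear G -> islinear H -> islinear (conv2 G H).
Proof. move=> lG lH; rewrite /conv2; lin. Qed.

Lemma conv2_e2r G u : islinear G -> conv2 G e2 u = G u.
Proof.
move=> lG; rewrite /conv2 -[RHS](counitR u lG); apply: tlift_ext => a b.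
by rewrite /e2 (linZ (lmul2r _)) mul2E2r.
Qed.
Lemma conv2_e2l G u : islinear G -> conv2 e2 G u = G u.
Proof.
move=> lG; rewrite /conv2 -[RHS](counitL u lG); apply: tlift_ext => a b.
by rewrite /e2 (linZ (lmul2l _)) mul2E2l.
Qed.


Lemma conv2A G H K u : islinear G -> islinear H -> islinear K ->
  conv2 (conv2 G H) K u = conv2 G (conv2 H K) u.
Proof.
move=> lG lH lK; rewrite /conv2.
rewrite (tlift_ext (g := fun x c => tlift (fun a b => mul2 (mul2 (G a) (H b)) (K c)) (psi x))); last first.
  by move=> x c; rewrite (tlift_push _ _ (lmul2l _)).
rewrite -coassoc; try by lin.
apply: tlift_ext => a b; rewrite (tlift_push _ _ (lmul2r _)).
by apply: tlift_ext => c d; rewrite mul2A.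
Qed.

Lemma A1 f g u : islinear f -> islinear g ->
  psi (conv f g u) = conv2 (fun x => psi (f x)) (fun x => psi (g x)) u.
Proof.
move=> lf lg; rewrite /conv sigpsi.
have lP : islinear (fun T => tmap sigma sigma (tensor_coprod psi T)).
  by rewrite /tmap /tensor_coprod; lin.
have H := tlift_push (fun a b => f a (x) g b) (psi u) lP; cbv beta in H; rewrite H.
apply: tlift_ext => x y.
rewrite /tensor_coprod tlift_tmul; last by lin.
rewrite /tmap tlift_push; last by lin.
apply: tlift_ext => a1 a2; rewrite tlift_push; last by lin.
apply: tlift_ext => b1 b2; rewrite tlift_tmul //; lin.
Qed.


Definition D4 (W : lmodType R) (h : U -> U -> U -> U -> W) u :=
  tlift (fun x y => tlift (fun x1 x2 => tlift (fun y1 y2 => h x1 x2 y1 y2) (psi y)) (psi x)) (psi u).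
Definition Phi (W : lmodType R) (h : U -> U -> U -> U -> W) u :=
  tlift (fun a b => tlift (fun b1 b2 => tlift (fun c d => h a c d b2) (psi b1)) (psi b)) (psi u).

Lemma D4Phi (W : lmodType R) (h : U -> U -> U -> U -> W) u :
  (forall b c d, islinear (fun a => h a b c d)) ->
  (forall a c d, islinear (fun b => h a b c d)) ->
  (forall a b d, islinear (fun c => h a b c d)) ->
  (forall a b c, islinear (fun d => h a b c d)) ->
  D4 h u = Phi h u.
Proof.
move=> h1 h2 h3 h4; rewrite /D4 /Phi.
have := coassoc (h := fun x1 x2 y => tlift (fun y1 y2 => h x1 x2 y1 y2) (psi y)) u.
cbv beta => <-; try by lin.
apply: tlift_ext => a b.
have := coassoc (h := h a) b; cbv beta => -> //; lin.
Qed.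

Lemma swap4 (W : lmodType R) (h : U -> U -> U -> U -> W) u :
  (forall b c d, islinear (fun a => h a b c d)) ->
  (forall a c d, islinear (fun b => h a b c d)) ->
  (forall a b d, islinear (fun c => h a b c d)) ->
  (forall a b c, islinear (fun d => h a b c d)) ->
  D4 h u = D4 (fun p q r s => h p r q s) u.
Proof.
move=> h1 h2 h3 h4; rewrite !D4Phi //; rewrite /Phi.
apply: tlift_ext => a b; apply: tlift_ext => b1 b2.
rewrite cocomm //; lin.
Qed.


Lemma A2 f g u : islinear f -> islinear g ->
  tmap (conv f g) (conv f g) (psi u) =
  conv2 (fun x => tmap f f (psi x)) (fun x => tmap g g (psi x)) u.
Proof.
move=> lf lg.
transitivity (D4 (fun p q r s => sigma (f p (x) g q) (x) sigma (f r (x) g s)) u).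
  rewrite /tmap /D4; apply: tlift_ext => x y; rewrite /conv.
  set V := sigma (tlift (fun a b => f a (x) g b) (psi y)).
  have L1 : islinear (fun z => sigma z (x) V) by lin.
  rewrite (tlift_push _ _ L1); apply: tlift_ext => x1 x2.
  have L2 : islinear (fun z => sigma (f x1 (x) g x2) (x) sigma z) by lin.
  by rewrite /V (tlift_push _ _ L2).
rewrite swap4; try by lin.
rewrite /D4 /conv2 /tmap; apply: tlift_ext => x y.
rewrite (tlift_push _ _ (lmul2l _)); apply: tlift_ext => a b.
rewrite /mul2 tlift_tmul; last exact: bmul2in.
have L3 : bilin (fun c d => sigma (f a (x) c) (x) sigma (f b (x) d)) by lin.
rewrite (tlift_push _ _ (tlift_lin L3)); apply: tlift_ext => y1 y2.
by rewrite tlift_tmul.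
Qed.


Lemma conv2_extr G H H' u : (forall x, H x = H' x) -> conv2 G H u = conv2 G H' u.
Proof. by move=> E; rewrite /conv2; apply: tlift_ext => a b; rewrite E. Qed.
Lemma conv2_extl G G' H u : (forall x, G x = G' x) -> conv2 G H u = conv2 G' H u.
Proof. by move=> E; rewrite /conv2; apply: tlift_ext => a b; rewrite E. Qed.

Lemma psi_e u : psi (e u) = e2 u.
Proof.
rewrite /e; case: Heta => _ -> _; rewrite /unit_coprod /tmap.
rewrite (linZ (tlift_lin _)); last by lin.
by rewrite tlift_tmul //; lin.
Qed.

Lemma tmap_e u : tmap e e (psi u) = e2 u.
Proof.
rewrite /tmap /e2 -(counitL (g := fun b => (eps b : R) *: E2)) //; last by lin.
apply: tlift_ext => a b; rewrite /e /E2 (eta1 (eps a)) (eta1 (eps b)).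
case: (tmul_bilin U U) => H1 H2.
by rewrite (linZ (H1 _)) (linZ (H2 _)).
Qed.

Lemma S_coalg u : psi (S u) = tmap S S (psi u).
Proof.
have la : forall x, conv2 psi (fun x => psi (S x)) x = e2 x.
  move=> x; rewrite -psi_e -(Smain x) A1 //.
have lb : forall x, conv2 (fun x => tmap S S (psi x)) psi x = e2 x.
  move=> x; rewrite -tmap_e.
  transitivity (tmap (conv S (fun x => x)) (conv S (fun x => x)) (psi x)); last first.
    by rewrite /tmap; apply: tlift_ext => a b; rewrite [conv S _ a]conv_comm // [conv S _ b]conv_comm // !Smain.
  rewrite A2; try exact: lS; try exact: lin_id.
  apply: conv2_extr => y; rewrite /tmap -{1}(tlift_tmulK (psi y)).
  by apply: tlift_ext.
have lP : islinear (fun x => psi (S x)) by lin.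
have lQ : islinear (fun x => tmap S S (psi x)) by rewrite /tmap; lin.
symmetry.
rewrite -(conv2_e2r u lQ) -(conv2_e2l u lP).
rewrite (conv2_extr _ _ (fun x => esym (la x))).
rewrite -conv2A //; apply: conv2_extl => x; exact: lb.
Qed.
Lemma main_ex : exists chi : U -> U,
    is_coalg_map psi eps psi eps chi /\
    (forall u, sigma (tmap id chi (psi u)) = eta (eps u)).
Proof.
exists S; split; first by split; [exact: lS | exact: S_coalg | exact: eps_S].
move=> u; exact: Smain.
Qed.

End Main.

End Aux.

Theorem proposition6p12 (R : comPzRingType) (U : lmodType R)
  (psi : U -> tensor U U) (eps : U -> R^o)
  (sigma : tensor U U -> U) (eta : R^o -> U) (F : nat -> U -> Prop) :
  (* U is a (coassociative, counital, cocommutative) coalgebra *)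
  is_coalgebra psi eps ->
  (* Abelian monoid object in coalgebras: sigma and eta are coalgebra maps, *)
  is_coalg_map (tensor_coprod psi) (tensor_counit eps) psi eps sigma ->
  @is_coalg_map R R^o U (@unit_coprod R) (@unit_counit R) psi eps eta ->
  (* ... associative, commutative, with unit eta *)
  (forall a b c, sigma (sigma (a (x) b) (x) c) = sigma (a (x) sigma (b (x) c))) ->
  (forall a b, sigma (a (x) b) = sigma (b (x) a)) ->
  (forall a, sigma (eta 1 (x) a) = a) ->
  (* good filtration whose good basepoint is the zero eta *)
  good_filtration psi eps F ->
  (forall r : R, F 0%N (eta r) /\ eps (eta r) = r) ->
  (* sigma (F_s U (x) F_t U) is contained in F_(s+t) U *)
  (forall (s t : nat) a b, F s a -> F t b -> F (s + t)%N (sigma (a (x) b))) ->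
  (* conclusion: U is an Abelian group object in coalgebras *)
  exists chi : U -> U,
    is_coalg_map psi eps psi eps chi /\
    (forall u, sigma (tmap id chi (psi u)) = eta (eps u)).
Proof.
move=> Hco Hsig Heta Ha Hc Hu Hg Hb _.
exact: (Aux.main_ex Hco Hsig Heta Ha Hc Hu Hg Hb).
Qed.
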